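(* Let $\mathscr{S}=(T,S,\sigma,\mu,\tau_T,\tau_S)$ be a relaxed scenario and $\mathscr{G}=(G_{<}(\mathscr{S}),G_{=}(\mathscr{S}),G_{>}(\mathscr{S}),\sigma)$. Then $T$ agrees with $(\mathscr{R}_T(\mathscr{G}),\mathscr{F}_T(\mathscr{G}))$ and $S$ agrees with $(\mathscr{R}_S(\mathscr{G}),\mathscr{F}_S(\mathscr{G}))$.
   Context: All trees are planted phylogenetic trees: a tree $T$ has a distinguished vertex $0_T$ of degree $1$ whose unique neighbor $\rho_T$ is the root, and every vertex other than $0_T$ and the leaves $L(T)$ has at least two children. For $x,y\in V(T)$ write $y\preceq_T x$ if $x$ lies on the path from $0_T$ to $y$; edges are written $uv$ with $v\prec_T u$. $\mathrm{lca}_T$ denotes the last common ancestor. A time map for $T$ is $\tau_T\colon V(T)\to\mathbb{R}$ with $\tau_T(x)<\tau_T(y)$ whenever $x\prec_T y$. A relaxed scenario $\mathscr{S}=(T,S,\sigma,\mu,\tau_T,\tau_S)$ consists of a gene tree $T$ with time map $\tau_T$, a species tree $S$ with time map $\tau_S$, a map $\sigma\colon L(T)\to M$ with $M\subseteq L(S)$, and a map $\mu\colon V(T)\to V(S)\cup E(S)$ such that (S0) $\mu(x)=0_S$ iff $x=0_T$; (S1) $\mu(x)\in L(S)$ iff $x\in L(T)$, in which case $\mu(x)=\sigma(x)$; (S2) if $\mu(x)\in V(S)$ then $\tau_S(\mu(x))=\tau_T(x)$; (S3) if $\mu(x)=uv\in E(S)$ then $\tau_S(v)<\tau_T(x)<\tau_S(u)$.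 The graphs $G_{=}(\mathscr{S})$, $G_{<}(\mathscr{S})$, $G_{>}(\mathscr{S})$ have vertex set $L(T)$, and for distinct $x,y$ the pair $xy$ is an edge of $G_{=}(\mathscr{S})$, $G_{<}(\mathscr{S})$, resp. $G_{>}(\mathscr{S})$ iff $\tau_T(\mathrm{lca}_T(x,y))$ is $=$, $<$, resp. $>$ than $\tau_S(\mathrm{lca}_S(\sigma(x),\sigma(y)))$. A tree displays the triple $xy|z$ if $\mathrm{lca}(x,y)\prec\mathrm{lca}(x,z)=\mathrm{lca}(y,z)$. A tree agrees with $(\mathscr{R},\mathscr{F})$ if it displays all triples of $\mathscr{R}$ and none of $\mathscr{F}$. For $\mathscr{G}=(G_<,G_=,G_>,\sigma)$ on vertex set $L$: $\mathscr{R}_T(\mathscr{G})$ contains $xy|z$ for $x,y,z\in L$ if ($xy\in E(G_<)$ and $xz,yz\notin E(G_<)$) or ($xz,yz\in E(G_>)$ and $xy\notin E(G_>)$); $\mathscr{F}_T(\mathscr{G})$ contains $xz|y$ and $yz|x$ if $xz,yz\in E(G_=)$ and $xy\notin E(G_=)$; $\mathscr{R}_S(\mathscr{G})$ contains $XY|Z$ if there are $x,y,z\in L$ with pairwise distinct colors $X=\sigma(x),Y=\sigma(y),Z=\sigma(z)$ and ($xz,yz\in E(G_<)$ and $xy\notin E(G_<)$) or ($xy\in E(G_>)$ and $xz,yz\notin E(G_>)$); $\mathscr{F}_S(\mathscr{G})$ contains $XZ|Y$ and $YZ|X$ if there are $x,y,z\in L$ with pairwise distinct colors $X,Y,Z$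 as before and $xz,yz\in E(G_=)$, $xy\notin E(G_=)$. *)

(* Defs.v *)
From mathcomp Require Import all_boot.
From Stdlib Require Import Reals.
Set Implicit Arguments. Unset Strict Implicit. Unset Printing Implicit Defensive.

(* A planted tree on a finite vertex type V is given by a parent map [par]
   and the distinguished vertex [z] (= 0_T), with par z = z. *)
Section Trees.
Variables (V : finType) (par : V -> V) (z : V).

Definition children (u : V) : {set V} := [set v | (v != z) && (par v == u)].

(* y ⪯ x : x lies on the path from 0_T to y  (x reachable from y going up) *)
Definition preceq (y x : V) : bool := connect (frel par) y x.
Definition prec (y x : V) : bool := preceq y x && (y != x).

Definition leaves : {set V} := [set v | (v != z) && (children v == set0)].

Definition planted_phylo_tree : Prop :=
  [/\ par z = z,
      (forall v, preceq v z),
      #|children z| = 1 &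
      (forall u, u != z -> children u != set0 -> 1 < #|children u|)].

Definition is_lca (x y w : V) : bool :=
  [&& preceq x w, preceq y w &
      [forall w', (preceq x w' && preceq y w') ==> preceq w w']].
Definition lca (x y : V) : V := odflt z [pick w | is_lca x y w].

Definition time_map (tau : V -> R) : Prop :=
  forall x y, prec x y -> (tau x < tau y)%R.

Definition displays (x y w : V) : Prop :=
  prec (lca x y) (lca x w) /\ lca x w = lca y w.

Definition agrees (Rs Fs : V -> V -> V -> Prop) : Prop :=
  forall a b c, (Rs a b c -> displays a b c) /\ (Fs a b c -> ~ displays a b c).
End Trees.

(* Images of mu: a vertex of S, or an edge uv of S (v ≺ u, u = par v). *)
Inductive loc (V : Type) := Vtx of V | Edg of V & V.
Arguments Vtx {V}. Arguments Edg {V}.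

Section Scenario.
Variables (VT VS : finType) (parT : VT -> VT) (zT : VT)
          (parS : VS -> VS) (zS : VS)
          (sigma : VT -> VS) (mu : VT -> loc VS)
          (tauT : VT -> R) (tauS : VS -> R).

Definition relaxed_scenario : Prop :=
  planted_phylo_tree parT zT /\ planted_phylo_tree parS zS /\
  time_map parT tauT /\ time_map parS tauS /\
  (forall x, x \in leaves parT zT -> sigma x \in leaves parS zS) /\
  (forall x u v, mu x = Edg u v -> v != zS /\ parS v = u) /\
  (forall x, mu x = Vtx zS <-> x = zT) /\
  (forall x, (exists v, mu x = Vtx v /\ v \in leaves parS zS)
             <-> x \in leaves parT zT) /\
  (forall x, x \in leaves parT zT -> mu x = Vtx (sigma x)) /\
  (forall x v, mu x = Vtx v -> tauS v = tauT x) /\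
  (forall x u v, mu x = Edg u v -> (tauS v < tauT x < tauS u)%R).

Definition Glt (x y : VT) : Prop :=
  x \in leaves parT zT /\ y \in leaves parT zT /\ x != y /\
  (tauT (lca parT zT x y) < tauS (lca parS zS (sigma x) (sigma y)))%R.
Definition Geq (x y : VT) : Prop :=
  x \in leaves parT zT /\ y \in leaves parT zT /\ x != y /\
  tauT (lca parT zT x y) = tauS (lca parS zS (sigma x) (sigma y)).
Definition Ggt (x y : VT) : Prop :=
  x \in leaves parT zT /\ y \in leaves parT zT /\ x != y /\
  (tauT (lca parT zT x y) > tauS (lca parS zS (sigma x) (sigma y)))%R.
End Scenario.

Section Triples.
Variables (VT VS : finType) (L : {set VT})
          (Gl Ge Gg : VT -> VT -> Prop) (sigma : VT -> VS).

Definition distinct3 (T : eqType) (a b c : T) : bool :=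
  [&& a != b, a != c & b != c].

Definition inL3 (x y z : VT) : bool := [&& x \in L, y \in L & z \in L].

Definition R_T (x y z : VT) : Prop :=
  [/\ inL3 x y z, distinct3 x y z &
      (Gl x y /\ ~ Gl x z /\ ~ Gl y z) \/ (Gg x z /\ Gg y z /\ ~ Gg x y)].

Definition F_T (a b c : VT) : Prop :=
  exists x y z, [/\ inL3 x y z, distinct3 x y z,
    Ge x z /\ Ge y z /\ ~ Ge x y &
    (a, b, c) = (x, z, y) \/ (a, b, c) = (y, z, x)].

Definition R_S (X Y Z : VS) : Prop :=
  exists x y z, [/\ inL3 x y z,
    [/\ sigma x = X, sigma y = Y & sigma z = Z], distinct3 X Y Z &
    (Gl x z /\ Gl y z /\ ~ Gl x y) \/ (Gg x y /\ ~ Gg x z /\ ~ Gg y z)].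

Definition F_S (A B C : VS) : Prop :=
  exists x y z, [/\ inL3 x y z,
    distinct3 (sigma x) (sigma y) (sigma z),
    Ge x z /\ Ge y z /\ ~ Ge x y &
    (A, B, C) = (sigma x, sigma z, sigma y) \/ (A, B, C) = (sigma y, sigma z, sigma x)].
End Triples.

(* Main.v *)
Require Import Defs.
From Stdlib Require Import Reals Lra Classical.
From mathcomp Require Import all_boot.
Set Implicit Arguments. Unset Strict Implicit.

Section Tr.
Variables (V : finType) (par : V -> V) (z : V).
Hypotheses (Hz : par z = z) (Hr : forall v, preceq par v z).

Lemma pre_refl x : preceq par x x.
Proof. exact: connect0. Qed.
Lemma pre_trans x y w : preceq par x y -> preceq par y w -> preceq par x w.
Proof. exact: connect_trans. Qed.
Lemma pre_iter x n : preceq par x (iter n par x).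
Proof. exact: fconnect_iter. Qed.
Lemma pre_ex x y : preceq par x y -> exists n, y = iter n par x.
Proof. by move=> H; exists (findex par x y); rewrite iter_findex. Qed.

Lemma pre_chain x a b : preceq par x a -> preceq par x b ->
  preceq par a b \/ preceq par b a.
Proof.
move=> /pre_ex [n ->] /pre_ex [m ->].
case: (leqP n m) => H.
  by left; rewrite -(subnK H) iterD; apply: pre_iter.
by right; rewrite -(subnK (ltnW H)) iterD; apply: pre_iter.
Qed.

Lemma pre_antisym x y : preceq par x y -> preceq par y x -> x = y.
Proof.
move=> /pre_ex [n Hy] /pre_ex [m Hx].
case: (eqVneq (n + m) 0) => Hnm.
  by move/eqP: Hnm; rewrite addn_eq0 => /andP [/eqP Hn _]; rewrite Hy Hn.
have Hp : forall t, iter (t * (n + m)) par x = x.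
  elim=> [|t IH] //=; rewrite mulSn iterD IH addnC iterD -Hy -Hx //.
have [k Hk] := pre_ex (Hr x).
have Hkz : forall j, iter (j + k) par x = z by move=> j; rewrite iterD -Hk iter_fix.
have Hle : k <= k * (n + m) by rewrite leq_pmulr // lt0n.
have xz : x = z by rewrite -{1}(Hp k) -(subnK Hle) Hkz.
by rewrite Hy xz iter_fix // -xz.
Qed.

Lemma lca_spec x y :
  [/\ preceq par x (lca par z x y), preceq par y (lca par z x y) &
      forall w, preceq par x w -> preceq par y w -> preceq par (lca par z x y) w].
Proof.
rewrite /lca; case: pickP => [w /and3P [H1 H2 /forallP H3]|H].
  split => // w' A B; have := H3 w'; rewrite A B /=; done.
exfalso.
have P0 : (fun w => preceq par x w && preceq par y w) z by rewrite /= !Hr.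
case: (@arg_minnP V z (fun w => preceq par x w && preceq par y w)
        (fun w => findex par x w) P0) => w /andP [A B] Hmin.
move: (H w); rewrite /is_lca A B /=; move/negP; apply; apply/forallP => w'.
apply/implyP => /andP [A' B'].
have := Hmin w'; rewrite A' B' => /(_ isT) Hle.
rewrite -(iter_findex A') -(subnK Hle) iterD (iter_findex A).
exact: pre_iter.
Qed.

Lemma lca_l x y : preceq par x (lca par z x y). Proof. by case: (lca_spec x y). Qed.
Lemma lca_r x y : preceq par y (lca par z x y). Proof. by case: (lca_spec x y). Qed.
Lemma lca_min x y w : preceq par x w -> preceq par y w -> preceq par (lca par z x y) w.
Proof. by case: (lca_spec x y) => _ _; apply. Qed.

Lemma lcaC x y : lca par z x y = lca par z y x.
Proof. by apply: pre_antisym; apply: lca_min; rewrite ?lca_l ?lca_r. Qed.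

Lemma top a b c : ~ displays par z a b c ->
  preceq par (lca par z a c) (lca par z a b) /\ preceq par (lca par z b c) (lca par z a b).
Proof.
move=> nd.
have Htop : preceq par (lca par z a c) (lca par z a b) ->
  preceq par (lca par z a c) (lca par z a b) /\ preceq par (lca par z b c) (lca par z a b).
  move=> H; split => //; apply: lca_min; first exact: lca_r.
  exact: pre_trans (lca_r a c) H.
case: (pre_chain (lca_l a b) (lca_l a c)) => H; last exact: Htop.
case: (eqVneq (lca par z a b) (lca par z a c)) => E.
  by apply: Htop; rewrite E pre_refl.
exfalso; apply: nd; split; first by rewrite /prec H E.
have H1 : preceq par (lca par z b c) (lca par z a c).
  by apply: lca_min; [exact: pre_trans (lca_r a b) H|exact: lca_r].
case: (pre_chain (lca_l b c) (lca_r a b)) => H2.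
  case/negP: E; apply/eqP; apply: pre_antisym => //.
  by apply: lca_min; [exact: lca_l|exact: pre_trans (lca_r b c) H2].
apply: pre_antisym => //.
by apply: lca_min; [exact: pre_trans (lca_l a b) H2|exact: lca_r].
Qed.

Lemma two a b c : preceq par (lca par z a b) (lca par z a c) \/
                  preceq par (lca par z a b) (lca par z b c).
Proof.
case: (pre_chain (lca_r a c) (lca_r b c)) => H.
  by right; apply: lca_min; [exact: pre_trans (lca_l a c) H|exact: lca_l].
by left; apply: lca_min; [exact: lca_l|exact: pre_trans (lca_l b c) H].
Qed.

Lemma tmono (tau : V -> R) a b : time_map par tau -> preceq par a b -> Rle (tau a) (tau b).
Proof.
move=> Ht H; case: (eqVneq a b) => E; first by rewrite E; apply: Rle_refl.
by apply: Rlt_le; apply: Ht; rewrite /prec H E.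
Qed.
End Tr.

Section Main.
Variables (VT VS : finType) (parT : VT -> VT) (zT : VT)
    (parS : VS -> VS) (zS : VS) (sigma : VT -> VS)
    (tauT : VT -> R) (tauS : VS -> R).
Hypotheses (HzT : parT zT = zT) (HrT : forall v, preceq parT v zT)
  (HzS : parS zS = zS) (HrS : forall v, preceq parS v zS)
  (HtT : time_map parT tauT) (HtS : time_map parS tauS).

Notation TT x y := (tauT (lca parT zT x y)).
Notation SS x y := (tauS (lca parS zS (sigma x) (sigma y))).
Notation L := (leaves parT zT).
Notation Gl := (Glt parT zT parS zS sigma tauT tauS).
Notation Ge := (Geq parT zT parS zS sigma tauT tauS).
Notation Gg := (Ggt parT zT parS zS sigma tauT tauS).

Lemma Gl_lt x y : Gl x y -> Rlt (TT x y) (SS x y).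
Proof. by case=> [_ [_ [_ H]]]. Qed.
Lemma Gg_lt x y : Gg x y -> Rlt (SS x y) (TT x y).
Proof. by case=> [_ [_ [_ H]]]. Qed.
Lemma Ge_eq x y : Ge x y -> TT x y = SS x y.
Proof. by case=> [_ [_ [_ H]]]. Qed.
Lemma nGl x y : x \in L -> y \in L -> x != y -> ~ Gl x y -> Rle (SS x y) (TT x y).
Proof. move=> a b c H; apply: Rnot_lt_le => H'; exact: H. Qed.
Lemma nGg x y : x \in L -> y \in L -> x != y -> ~ Gg x y -> Rle (TT x y) (SS x y).
Proof. move=> a b c H; apply: Rnot_lt_le => H'; exact: H. Qed.
Lemma nGe x y : x \in L -> y \in L -> x != y -> ~ Ge x y -> TT x y <> SS x y.
Proof. move=> a b c H H'; exact: H. Qed.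

Lemma Tlt a b : prec parT a b -> Rlt (tauT a) (tauT b). Proof. exact: HtT. Qed.
Lemma Slt a b : prec parS a b -> Rlt (tauS a) (tauS b). Proof. exact: HtS. Qed.

Lemma FT_aux x y w : x \in L -> y \in L -> x != y -> Ge x w -> Ge y w -> ~ Ge x y ->
  ~ displays parT zT x w y.
Proof.
move=> lx ly dxy Hxw Hyw Hxy [D1 D2].
have e1 := Ge_eq Hxw; have e2 := Ge_eq Hyw; have n := nGe lx ly dxy Hxy.
have t1 := Tlt D1.
rewrite D2 (lcaC HzT HrT w y) in t1 n.
case: (classic (displays parS zS (sigma x) (sigma w) (sigma y))) => [[_ E]|nd].
  by apply: n; rewrite E (lcaC HzS HrS (sigma w)) -e2.
have [s1 s2] := top HzS HrS nd.
have := tmono HtS s2; rewrite (lcaC HzS HrS (sigma w)); lra.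
Qed.

Lemma FS_aux x y w : x \in L -> y \in L -> x != y -> Ge x w -> Ge y w -> ~ Ge x y ->
  ~ displays parS zS (sigma x) (sigma w) (sigma y).
Proof.
move=> lx ly dxy Hxw Hyw Hxy [D1 D2].
have e1 := Ge_eq Hxw; have e2 := Ge_eq Hyw; have n := nGe lx ly dxy Hxy.
have t1 := Slt D1.
rewrite D2 (lcaC HzS HrS (sigma w) (sigma y)) in t1 n.
case: (classic (displays parT zT x w y)) => [[_ E]|nd].
  by apply: n; rewrite E (lcaC HzT HrT w) e2.
have [s1 s2] := top HzT HrT nd.
have := tmono HtT s2; rewrite (lcaC HzT HrT w); lra.
Qed.

Lemma Ge_sym x y : Ge x y -> Ge y x.
Proof.
case=> [a [b [c d]]]; split => //; split => //; split; first by rewrite eq_sym.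
by rewrite (lcaC HzT HrT) (lcaC HzS HrS).
Qed.

Lemma partT : agrees parT zT (R_T L Gl Gg) (F_T L Ge).
Proof.
move=> a b c; split.
  move=> [/and3P [la lb lc] /and3P [dab dac dbc] H]; apply: NNPP => nd.
  have [t1 t2] := top HzT HrT nd.
  have m1 := tmono HtT t1; have m2 := tmono HtT t2.
  case: H => [[Hab [Hac Hbc]] | [Hac [Hbc Hab]]].
    have := Gl_lt Hab; have := nGl la lc dac Hac; have := nGl lb lc dbc Hbc.
    by case: (two HrS (sigma a) (sigma b) (sigma c)) => s; have := tmono HtS s; lra.
  have := Gg_lt Hac; have := Gg_lt Hbc; have := nGg la lb dab Hab.
  by case: (two HrS (sigma a) (sigma b) (sigma c)) => s; have := tmono HtS s; lra.
move=> [x [y [w [/and3P [lx ly lw] /and3P [dxy dxw dyw] [Hxw [Hyw Hxy]] [] [-> -> ->]]]]].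
  exact: FT_aux.
apply: FT_aux => //; first by rewrite eq_sym.
by move/Ge_sym.
Qed.

Lemma partS : agrees parS zS (R_S L Gl Gg sigma) (F_S L Ge sigma).
Proof.
move=> A B C; split.
  move=> [x [y [w [/and3P [lx ly lw] [<- <- <-] /and3P [dab dac dbc] H]]]].
  have dxy : x != y by apply/eqP => E; rewrite E eqxx in dab.
  have dxw : x != w by apply/eqP => E; rewrite E eqxx in dac.
  have dyw : y != w by apply/eqP => E; rewrite E eqxx in dbc.
  apply: NNPP => nd.
  have [t1 t2] := top HzS HrS nd.
  have m1 := tmono HtS t1; have m2 := tmono HtS t2.
  case: H => [[Hac [Hbc Hab]] | [Hab [Hac Hbc]]].
    have := Gl_lt Hac; have := Gl_lt Hbc; have := nGl lx ly dxy Hab.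
    by case: (two HrT x y w) => s; have := tmono HtT s; lra.
  have := Gg_lt Hab; have := nGg lx lw dxw Hac; have := nGg ly lw dyw Hbc.
  by case: (two HrT x y w) => s; have := tmono HtT s; lra.
move=> [x [y [w [/and3P [lx ly lw] /and3P [dxy dxw dyw] [Hxw [Hyw Hxy]] [] [-> -> ->]]]]].
  apply: FS_aux => //; by apply/eqP => E; rewrite E eqxx in dxy.
apply: FS_aux => //; last by move/Ge_sym.
by apply/eqP => E; rewrite E eqxx in dxy.
Qed.
End Main.

Theorem proposition2 (VT VS : finType) (parT : VT -> VT) (zT : VT)
    (parS : VS -> VS) (zS : VS) (sigma : VT -> VS) (mu : VT -> loc VS)
    (tauT : VT -> R) (tauS : VS -> R) :
  relaxed_scenario parT zT parS zS sigma mu tauT tauS ->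
  let L := leaves parT zT in
  let Gl := Glt parT zT parS zS sigma tauT tauS in
  let Ge := Geq parT zT parS zS sigma tauT tauS in
  let Gg := Ggt parT zT parS zS sigma tauT tauS in
  agrees parT zT (R_T L Gl Gg) (F_T L Ge) /\
  agrees parS zS (R_S L Gl Gg sigma) (F_S L Ge sigma).
Proof.
case=> [[HzT HrT _ _] [[HzS HrS _ _] [HtT [HtS _]]]] /=.
split; [exact: partT | exact: partS].
Qed.
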